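(* Let $n\geq1$ and let $e\in\mathbf{I}_n(\mathcal{AW})$ have parameters $(p,q)$. Then there are exactly $p+q$ sequences in $\mathbf{I}_{n+1}(\mathcal{AW})$ whose first $n$ entries form $e$; these are $(e_1,\ldots,e_n,b)$ with $0\leq b\leq\max\{e_{n-1},e_n\}+1$, and, as $b$ runs from $0$ to $\max\{e_{n-1},e_n\}+1$, their parameters are respectively $$(1,p),(2,p-1),\ldots,(p,1),\ (p+1,1),(p+2,1),\ldots,(p+q,1).$$
   Context: $\mathbf{I}_n$ is the set of inversion sequences $e=(e_1,\ldots,e_n)$ with $0\leq e_i<i$. $\mathbf{I}_n(\mathcal{AW})$ is the set of $e\in\mathbf{I}_n$ such that $e_i\leq\max\{e_{i-2},e_{i-1}\}+1$ for every $2<i\leq n$. The parameters of $e\in\mathbf{I}_n(\mathcal{AW})$ are $(p,q)$ with $p=e_n+1$ and $q=\max\{e_{n-1},e_n\}+1-e_n$, using the convention $e_0=0$ (so the sequence $(0)$ of length $1$ has parameters $(1,1)$). *)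

(* Defs.v *)
(* Inversion sequences are represented as [seq nat];
   the 0-based list entry [nth 0 e k] is the paper's 1-based entry e_{k+1}. *)
From mathcomp Require Import all_boot.
Set Implicit Arguments. Unset Strict Implicit. Unset Printing Implicit Defensive.

(* Paper's 1-indexed entry e_i, with the convention e_0 = 0. *)
Definition ent (e : seq nat) (i : nat) : nat :=
  if i is k.+1 then nth 0 e k else 0.

Definition inv_seq (n : nat) (e : seq nat) : bool :=
  (size e == n) && [forall i : 'I_n, ent e i.+1 < i.+1].

Definition AW (n : nat) (e : seq nat) : bool :=
  inv_seq n e &&
  [forall i : 'I_n.+1, (2 < i) ==> (ent e i <= maxn (ent e i.-2) (ent e i.-1) + 1)].

Definition params (e : seq nat) : nat * nat :=
  let n := size e in
  (ent e n + 1, maxn (ent e n.-1) (ent e n) + 1 - ent e n).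

(* Main.v *)
Require Import Defs.
From mathcomp Require Import all_boot.
From mathcomp Require Import zify.

Lemma ent_rcons_lt (e : seq nat) b k : k <= size e -> ent (rcons e b) k = ent e k.
Proof.
case: k => [|j] //= Hj; rewrite nth_rcons Hj //.
Qed.

Lemma ent_rcons_last (e : seq nat) b : ent (rcons e b) (size e).+1 = b.
Proof. by rewrite /= nth_rcons ltnn eqxx. Qed.

Lemma inv_bound n (e : seq nat) k : inv_seq n e -> k <= n -> ent e k <= k.-1.
Proof.
case/andP=> _ /forallP H; case: k => [|j] // Hj.
have := H (Ordinal Hj) => /=; rewrite ltnS //.
Qed.

Theorem lemma5p1 (n : nat) (e : seq nat) (p q : nat) :
  1 <= n -> AW n e -> params e = (p, q) ->
  let m := maxn (ent e n.-1) (ent e n) + 1 in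
  (* the one-entry extensions of e inside I_{n+1}(AW) are exactly (e, b), 0 <= b <= m *)
  (forall f : seq nat,
      (AW n.+1 f && (take n f == e)) <-> (exists2 b, b <= m & f = rcons e b))
  (* there are exactly p + q of them *)
  /\ uniq [seq rcons e b | b <- iota 0 m.+1]
  /\ size [seq rcons e b | b <- iota 0 m.+1] = p + q
  (* their parameters, as b runs from 0 to m *)
  /\ (forall b, b <= m ->
        params (rcons e b) = (if b < p then (b.+1, p - b) else (b.+1, 1))).
Proof.
move=> n1 HAW Hpar m.
have HAW' := HAW; case/andP: HAW' => Hinv /forallP Haw.
have Hsz : size e = n by case/andP: Hinv => /eqP.
move: Hpar; rewrite /params Hsz => -[Hp Hq].
split; last split; last split.
- move=> f; split.
  + case/andP=> /andP[/andP[/eqP szf /forallP Hf] /forallP Hfa] /eqP Ht.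
    have [b Hf'] : exists b, f = rcons e b.
      case/lastP: f szf Ht {Hf Hfa} => [|s x] //.
      rewrite size_rcons => -[Hs]; rewrite -cats1 take_size_cat // => ->.
      by exists x; rewrite cats1.
    exists b => //.
    have Hb : ent f n.+1 = b by rewrite Hf' -Hsz ent_rcons_last.
    case: (leqP 2 n) => Hn.
    * have := Hfa (Ordinal (ltnSn n.+1)).
      rewrite Hb; have -> : 2 < n.+1 by lia.
      rewrite /= Hf' -/(ent (rcons e b) n.-1) -/(ent (rcons e b) n).
      rewrite !ent_rcons_lt ?Hsz; try lia.
    * have := Hf (Ordinal (ltnSn n)) => /=.
      rewrite -/(ent f n.+1) Hb /m; lia.
  + case=> b Hb ->.
    have Ht : take n (rcons e b) = e by rewrite -Hsz -cats1 take_size_cat.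
    rewrite Ht eqxx andbT.
    have Hm : m <= n.
      have h1 := @inv_bound n e n.-1 Hinv; have h2 := @inv_bound n e n Hinv.
      rewrite /m; move: (h1 (leq_pred n)) (h2 (leqnn n)); case: (n) n1 => // k _ /=; lia.
    apply/andP; split.
    * apply/andP; split; first by rewrite size_rcons Hsz.
      apply/forallP => i.
      case: (ltnP i n) => Hi.
      - rewrite (ent_rcons_lt _ _) ?Hsz //.
        by case/andP: Hinv => _ /forallP /(_ (Ordinal Hi)).
      - have -> : (i : nat) = n by have := ltn_ord i; lia.
        rewrite -Hsz ent_rcons_last; lia.
    * apply/forallP => i; apply/implyP => H2.
      case: (ltnP i n.+1) => Hi.
      - rewrite !(ent_rcons_lt _ _) ?Hsz; try lia.
        by have := Haw (Ordinal Hi); rewrite /= H2.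
      - have -> : (i : nat) = n.+1 by have := ltn_ord i; lia.
        rewrite -{1}Hsz ent_rcons_last !(ent_rcons_lt _ _) ?Hsz /=; try lia.
- rewrite map_inj_uniq ?iota_uniq // => x y /(congr1 (last 0)).
  by rewrite !last_rcons.
- rewrite size_map size_iota /m -Hp -Hq; lia.
- move=> b Hb; rewrite /params size_rcons Hsz /=.
  rewrite -/(ent (rcons e b) n.+1) -{1}Hsz ent_rcons_last ent_rcons_lt ?Hsz //.
  rewrite -Hp -{2 3}Hsz ent_rcons_last; case: ifP => H; congr pair; lia.
Qed.
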